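(* Let $k$ be an uncountable algebraically closed field of characteristic $p>0$. Let $f\in k[[x_1,\dots,x_n]]$ be such that $k[[x_1,\dots,x_n]]/(f)$ is an $(n-1)$-dimensional hypersurface ring, and let $g\in k[[x_1,\dots,x_n]]$ be a formal power series with $g\neq 0$, $g(0)=0$ and $g\notin k\cdot f$. Then there is a subset $\Lambda\subseteq k$, dense in the Zariski topology of $k$, such that for every $\alpha\in\Lambda$, $$\operatorname{e}_{HK}\Big(\frac{k[[x_1,\dots,x_n]]}{(f+\alpha g)}\Big)\le \operatorname{e}_{HK}\Big(\frac{k[[x_1,\dots,x_n]]}{(f)}\Big).$$ (Equivalently, with $R=k[[x_1,\dots,x_n]][t]/(f+tg)$, $t_\alpha=t-\alpha$ and $\mathfrak m_\alpha=(x_1,\dots,x_n,t-\alpha)$, one has $\operatorname{e}_{HK}((R/t_\alpha R)_{\mathfrak m_\alpha})\le \operatorname{e}_{HK}((R/tR)_{\mathfrak m_0})$ for all $\alpha\in\Lambda$.)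
   Context: For a $d$-dimensional Noetherian local ring $(A,\mathfrak m)$ of characteristic $p>0$, $\mathfrak m^{[q]}=(a^q:a\in\mathfrak m)$ for $q=p^e$, and $\operatorname{e}_{HK}(A)=\lim_{q\to\infty}\lambda(A/\mathfrak m^{[q]})/q^d$, where $\lambda$ denotes length. *)

(* Defs.v *)
From HB Require Import structures.
From mathcomp Require Import all_boot all_order all_algebra.
From mathcomp Require Import classical_sets topology normedtype sequences.
From mathcomp Require Import Rstruct Rstruct_topology.
Set Implicit Arguments.
Unset Strict Implicit.
Unset Printing Implicit Defensive.
Import Order.TTheory GRing.Theory Num.Theory.
Local Open Scope ring_scope.

(* A formal power series in k[[x_1,...,x_n]], given by its coefficient
   function on exponent vectors (a : 'I_n -> nat encodes x^a). *)
Definition pseries (k : Type) (n : nat) := {ffun 'I_n -> nat} -> k.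

Section HK.
Variables (k : fieldType) (n : nat).

Definition ps_const (f : pseries k n) : k := f [ffun _ => 0%N].

Definition ps_add_scale (f g : pseries k n) (a : k) : pseries k n :=
  fun m => f m + a * g m.

(* Monomials x^b surviving in k[[x]]/(x_1^q,...,x_n^q) : exponents b_i < q. *)
Definition trunc_mon (q : nat) := {ffun 'I_n -> 'I_q}.

(* Matrix whose row indexed by the monomial x^a is the image of x^a * f in
   k[[x]]/(x_1^q,...,x_n^q) = k[x]/(x_1^q,...,x_n^q), written in the monomial
   basis; its row space is the ideal generated by f in that algebra. *)
Definition frob_mx (f : pseries k n) (q : nat) : 'M[k]_(#|trunc_mon q|) :=
  \matrix_(i, j)
    let a := @enum_val (trunc_mon q) predT i in
    let b := @enum_val (trunc_mon q) predT j in
    if [forall t, a t <= b t]%N then f [ffun t => (b t - a t)%N] else 0.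

(* lambda( k[[x]]/(f) / m^[q] ) = dim_k k[[x]]/(f, x_1^q, ..., x_n^q)
   (for q a power of char k, m^[q] is generated by the images of the x_i^q). *)
Definition hk_length (f : pseries k n) (q : nat) : nat :=
  (#|trunc_mon q| - \rank (frob_mx f q))%N.

(* e_HK of k[[x]]/(f), a ring of dimension d = n - 1, in characteristic p:
   lim_{e -> oo} lambda(A / m^[p^e]) / (p^e)^d. *)
Definition eHK (p : nat) (f : pseries k n) : Rdefinitions.R :=
  limn (fun e : nat =>
          ((hk_length f (p ^ e))%:R / ((p ^ e)%:R ^+ n.-1)) : Rdefinitions.R).

(* Zariski density in the affine line k: the only polynomial vanishing on L
   is 0 (i.e. the Zariski closure V(I(L)) of L is all of k). *)
Definition zariski_dense (L : k -> Prop) : Prop :=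
  forall P : {poly k}, (forall a, L a -> root P a) -> P = 0.

End HK.

Definition uncountable (T : Type) : Prop :=
  ~ exists s : nat -> T, forall x, exists m, s m = x.

(* Main.v *)
Require Import Defs.
From HB Require Import structures.
From mathcomp Require Import all_boot all_order all_algebra.
From mathcomp Require Import classical_sets topology normedtype sequences.
From mathcomp Require Import Rstruct Rstruct_topology.
From mathcomp Require Import zify boolp.
Set Implicit Arguments.
Unset Strict Implicit.
Unset Printing Implicit Defensive.
Import Order.TTheory GRing.Theory Num.Theory.
Local Open Scope ring_scope.

Section M.
Variables (k : fieldType) (n q : nat).
Local Notation T := (trunc_mon n q).
Local Notation N := #|T|.
Definition ev (i : 'I_N) : T := @enum_val T predT i.
Lemma evK (x : T) : ev (enum_rank x) = x.
Proof. exact: enum_rankK. Qed.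
Lemma ev_inj : injective ev.
Proof. exact: enum_val_inj. Qed.
Definition mxF (F : T -> T -> k) : 'M[k]_N := \matrix_(i, j) F (ev i) (ev j).

Lemma sum_T (F : T -> k) : \sum_(i < N) F (ev i) = \sum_(c : T) F c.
Proof. by rewrite -(big_enum_val (A:=predT) F); apply: eq_bigl. Qed.

Lemma mxF_mul F G : mxF F *m mxF G = mxF (fun a b => \sum_(c : T) F a c * G c b).
Proof.
apply/matrixP => i j; rewrite !mxE -sum_T; apply: eq_bigr => l _; by rewrite !mxE.
Qed.

Lemma frob_mxE (f : pseries k n) : frob_mx f q =
  mxF (fun a b => if [forall t, a t <= b t]%N then f [ffun t => (b t - a t)%N] else 0).
Proof. by []. Qed.

Lemma mxFE F i j : mxF F i j = F (ev i) (ev j).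
Proof. by rewrite mxE. Qed.
End M.
Lemma frobD (R : pzRingType) (p : nat) (x y : R) : prime p -> p%:R = 0 :> R ->
  GRing.comm x y -> (x + y) ^+ p = x ^+ p + y ^+ p.
Proof.
move=> pp p0 cxy; rewrite exprDn_comm //.
case: p pp p0 => [//|p'] pp p0.
rewrite big_ord_recl big_ord_recr /= subn0 expr0 mulr1 bin0 mulr1n.
rewrite subnn expr0 mul1r binn mulr1n big1 ?add0r ?addr0 // => i _.
have H : (p'.+1 %| 'C(p'.+1, bump 0 i))%N.
  apply: prime_dvd_bin => //; rewrite /bump /=; have := ltn_ord i; lia.
case/dvdnP: H => c ->; by rewrite mulrnA -mulr_natr p0 mulr0.
Qed.

Lemma frob_sum (R : pzRingType) (p : nat) (I : Type) (r : seq I) (x : I -> R) :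
  prime p -> p%:R = 0 :> R -> (forall i j, GRing.comm (x i) (x j)) ->
  (\sum_(i <- r) x i) ^+ p = \sum_(i <- r) x i ^+ p.
Proof.
move=> pp p0 cx; elim: r => [|a r IH]; first by rewrite !big_nil expr0n; case: p pp {p0}.
rewrite !big_cons frobD // ?IH //; apply: commr_sum => j _; exact: cx.
Qed.

Section Shift.
Variables (k : fieldType) (n q : nat).
Local Notation T := (trunc_mon n q).
Local Notation N := #|T|.

Definition S (v : 'I_n -> nat) : 'M[k]_N :=
  mxF (fun a b => ([forall t, (b t : nat) == a t + v t]%N)%:R).

Lemma S_ext u v : (forall t, u t = v t) -> S u = S v.
Proof.
move=> E; apply/matrixP => i j; rewrite !mxFE.
by congr (_%:R); congr nat_of_bool; apply/eq_forallb => t; rewrite E.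
Qed.

Lemma T_eq (x y : T) : (forall t, (x t : nat) = y t) -> x = y.
Proof. by move=> E; apply/ffunP => t; apply: val_inj; apply: E. Qed.

Lemma S_mul u v : S u *m S v = S (fun t => u t + v t)%N.
Proof.
rewrite /S mxF_mul; apply/matrixP => i j; rewrite !mxFE.
set a := ev i; set b := ev j.
case: (pickP [pred c : T | [forall t, (c t : nat) == a t + u t]%N]) => [c /= /forallP Hc|Hn].
  rewrite (bigD1 c) //= big1 ?addr0.
    rewrite (_ : [forall t, _] = true) ?mul1r; last by apply/forallP => t; rewrite Hc.
    congr (_%:R); congr nat_of_bool; apply/eq_forallb => t; by rewrite (eqP (Hc t)) addnA.
  move=> x xc; case: ([forall t, (x t : nat) == a t + u t]%N) /forallP => Hx; last by rewrite mul0r.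
  case/eqP: xc; apply: T_eq => t; by rewrite (eqP (Hx t)) (eqP (Hc t)).
rewrite big1 => [|x _]; last first.
  by have := Hn x; rewrite /= => ->; rewrite mul0r.
case: ([forall t, (b t : nat) == a t + (u t + v t)]%N) /forallP => Hb //.
have Hx : forall t, (a t + u t < q)%N.
  move=> t; have := ltn_ord (b t); rewrite (eqP (Hb t)); lia.
have := Hn [ffun t => Ordinal (Hx t)]; rewrite /=.
by rewrite (_ : [forall t, _] = true) //; apply/forallP => t; rewrite ffunE.
Qed.

Lemma S0 v : (forall t, v t = 0%N) -> S v = 1%:M.
Proof.
move=> v0; apply/matrixP => i j; rewrite mxFE !mxE.
congr (_%:R); congr nat_of_bool; apply/forallP/eqP => [H|<- t]; last by rewrite v0 addn0.
apply: (can_inj (@enum_valK T)); apply/esym/T_eq => t.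
by rewrite (eqP (H t)) v0 addn0.
Qed.

Lemma S_comm u v : S u *m S v = S v *m S u.
Proof. by rewrite !S_mul; apply: S_ext => t; rewrite addnC. Qed.

End Shift.

Section Decomp.
Variables (k : fieldType) (n q : nat).
Local Notation T := (trunc_mon n q).
Local Notation N := #|T|.
Local Notation SS := (@S k n q).

Lemma S_exp v i : (SS v) ^+ i = SS (fun t => i * v t)%N.
Proof.
elim: i => [|i IH]; first by rewrite expr0 S0.
by rewrite exprS IH -mulmxE S_mul; apply: S_ext => t; rewrite mulSn.
Qed.

Lemma mxF_sumS (F : {ffun 'I_n -> nat} -> k) d : (0 < d)%N ->
  \sum_(m : T) F [ffun t => (m t : nat)] *: SS (fun t => d * m t)%N =
  mxF (fun a b => if [forall t, a t <= b t]%N && [forall t, d %| b t - a t]%N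
                  then F [ffun t => (b t - a t) %/ d]%N else 0).
Proof.
move=> d0; apply/matrixP => i j; rewrite summxE mxFE.
under eq_bigr do rewrite mxE mxFE.
set a := ev i; set b := ev j.
case: (pickP [pred m : T | [forall t, (b t : nat) == a t + d * m t]%N]) => [m /= /forallP Hm|Hn].
  rewrite (bigD1 m) //= big1 ?addr0.
    rewrite (_ : [forall t, _] = true) ?mulr1; last by apply/forallP => t; rewrite Hm.
    have -> : [forall t, (a t <= b t)%N] && [forall t, (d %| b t - a t)%N].
      apply/andP; split; apply/forallP => t; rewrite (eqP (Hm t)) ?leq_addr //.
      by rewrite (_ : (a t + d * m t - a t = d * m t)%N) ?dvdn_mulr //; lia.
    congr F; apply/ffunP => t; rewrite !ffunE (eqP (Hm t)) addKn mulKn //.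
  move=> x xm; case: ([forall t, (b t : nat) == a t + d * x t]%N) /forallP => Hx; last by rewrite mulr0.
  case/eqP: xm; apply: T_eq => t; have := eqP (Hx t); rewrite (eqP (Hm t)).
  by move/addnI/eqP; rewrite eqn_pmul2l // => /eqP.
rewrite big1 => [|x _]; last first.
  by have := Hn x; rewrite /= => ->; rewrite mulr0.
case: ifP => // /andP [/forallP H1 /forallP H2].
have Hx : forall t, ((b t - a t) %/ d < q)%N.
  move=> t; apply: (leq_ltn_trans (leq_div _ _)); have := ltn_ord (b t); lia.
have := Hn [ffun t => Ordinal (Hx t)]; rewrite /=.
rewrite (_ : [forall t, _] = true) //; apply/forallP => t; rewrite ffunE /=.
by rewrite mulnC divnK ?H2 // subnKC ?H1.
Qed.

End Decomp.

Definition hser (k : fieldType) (n p : nat) (f : pseries k n) : pseries k n :=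
  fun v => if [forall t, p %| v t]%N then f [ffun t => v t %/ p]%N ^+ p else 0.

Section Frob.
Variables (k : fieldType) (n q : nat).
Local Notation T := (trunc_mon n q).
Local Notation N := #|T|.
Local Notation SS := (@S k n q).

Lemma frob_mx_sum (f : pseries k n) :
  frob_mx f q = \sum_(m : T) f [ffun t => (m t : nat)] *: SS (fun t => 1 * m t)%N.
Proof.
rewrite (@mxF_sumS k n q f 1) // frob_mxE; apply/matrixP => i j; rewrite !mxFE.
case: ifP => H //=.
rewrite (_ : [forall t, _] = true) //=; last by apply/forallP => t; rewrite dvd1n.
by congr f; apply/ffunP => t; rewrite !ffunE divn1.
Qed.

Lemma hser_mx (p : nat) (f : pseries k n) : (0 < p)%N ->
  frob_mx (hser p f) q = \sum_(m : T) (f [ffun t => (m t : nat)]) ^+ p *: SS (fun t => p * m t)%N.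
Proof.
move=> p0; rewrite (@mxF_sumS k n q (fun v => f v ^+ p) p) // frob_mxE; apply/matrixP => i j; rewrite !mxFE.
case: ifP => H //=; rewrite /hser.
rewrite (_ : [forall t, _] = [forall t, (p %| ev j t - ev i t)%N]); last first.
  by apply: eq_forallb => t; rewrite ffunE.
case: ifP => // _; congr (f _ ^+ p); apply/ffunP => t; by rewrite !ffunE.
Qed.

Lemma pchar_mx (p : nat) : p \in [pchar k] -> p%:R = 0 :> 'M[k]_N.
Proof.
move=> pc; apply/matrixP => i j; rewrite mulmxnE !mxE.
by rewrite -mulr_natr (pcharf0 pc) mulr0.
Qed.

Lemma exprZmx (c : k) (A : 'M[k]_N) i : (c *: A) ^+ i = c ^+ i *: A ^+ i.
Proof.
elim: i => [|i IH]; first by rewrite !expr0 scale1r.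
by rewrite !exprS IH -!mulmxE -scalemxAl -scalemxAr scalerA.
Qed.

Lemma frob_pow (p : nat) (f : pseries k n) : p \in [pchar k] ->
  (frob_mx f q) ^+ p = frob_mx (hser p f) q.
Proof.
move=> pc; have pp := pcharf_prime pc; have p0 := prime_gt0 pp.
rewrite frob_mx_sum hser_mx // frob_sum //; last 2 first.
- exact: pchar_mx.
- move=> x y; rewrite /GRing.comm -!mulmxE -!scalemxAl -!scalemxAr S_comm.
  by rewrite !scalerA mulrC.
apply: eq_bigr => m _; rewrite exprZmx S_exp; congr (_ *: _); apply: S_ext => t.
by rewrite mul1n.
Qed.
End Frob.

Lemma coordE (p x y : nat) : (0 < p)%N ->
  ((x <= y) && (p %| y - x))%N = ((x %% p == y %% p) && (x %/ p <= y %/ p))%N.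
Proof.
move=> p0; apply/idP/idP.
  case/andP=> xy; rewrite -eqn_mod_dvd // => /eqP E; rewrite E eqxx leq_div2r //.
case/andP=> /eqP E le; have xy : (x <= y)%N.
  by rewrite (divn_eq x p) (divn_eq y p) E leq_add2r leq_mul2r le orbT.
by rewrite xy /= -(eqn_mod_dvd p xy) E.
Qed.

Lemma coord_div (p x y : nat) : (0 < p)%N -> (x %% p = y %% p)%N ->
  ((y - x) %/ p = y %/ p - x %/ p)%N.
Proof.
move=> p0 E; rewrite {1}(divn_eq x p) {1}(divn_eq y p) E subnDr -mulnBl mulnK //.
Qed.

Lemma divI_proof (p q : nat) (x : 'I_(p * q)) : (x %/ p < q)%N.
Proof.
case: p x => [|p] x; first by case: x.
rewrite ltn_divLR //; have := ltn_ord x; move: (nat_of_ord x) => y; lia.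
Qed.

Lemma modI_proof (p q : nat) (x : 'I_(p * q)) : (x %% p < p)%N.
Proof.
case: p x => [|p] x; first by case: x.
by rewrite ltn_pmod.
Qed.

Lemma sum_ind (R : pzSemiRingType) (I : finType) (d : I) (e : bool) (G : I -> R) :
  \sum_(y : I) ((y == d) && e)%:R * G y = e%:R * G d.
Proof.
rewrite (bigD1 d) //= eqxx /= big1 ?addr0 // => y /negbTE ->; by rewrite mul0r.
Qed.

Lemma sum_indr (R : pzSemiRingType) (I : finType) (d : I) (e : bool) (G : I -> R) :
  \sum_(y : I) G y * ((y == d) && e)%:R = G d * e%:R.
Proof.
rewrite (bigD1 d) //= eqxx /= big1 ?addr0 // => y /negbTE ->; by rewrite mulr0.
Qed.

Lemma rank_sum (k : fieldType) m N (I : Type) (r : seq I) (M : I -> 'M[k]_(m, N)) :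
  (\rank (\sum_(i <- r) M i)%R <= \sum_(i <- r) \rank (M i))%N.
Proof.
elim: r => [|a r IH]; first by rewrite !big_nil mxrank0.
rewrite !big_cons; apply: leq_trans (mxrank_add _ _) _; exact: leq_add.
Qed.

Section Block.
Variables (k : fieldType) (n p q : nat).
Local Notation Tq := (trunc_mon n q).
Local Notation Tp := (trunc_mon n p).
Local Notation TQ := (trunc_mon n (p * q)).

Definition divT (a : TQ) : Tq := [ffun t => Ordinal (divI_proof (a t))].
Definition modT (a : TQ) : Tp := [ffun t => Ordinal (modI_proof (a t))].

Lemma decompE (x : TQ) (c : Tp) (y : Tq) :
  [forall t, (x t : nat) == p * y t + c t]%N = (y == divT x) && (c == modT x).
Proof.
apply/forallP/andP => [H|[/eqP -> /eqP ->] t]; last first.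
  by rewrite !ffunE /=; move: (nat_of_ord (x t)) => z; rewrite mulnC -divn_eq.
split; apply/eqP/ffunP => t; apply: val_inj; rewrite ffunE /= (eqP (H t));
  have p0 : (0 < p)%N by apply: leq_ltn_trans (ltn_ord (c t)).
  by rewrite mulnC divnMDl // divn_small ?addn0.
by rewrite mulnC modnMDl modn_small.
Qed.

Local Notation Nq := #|Tq|.
Local Notation NQ := #|TQ|.

Definition Xc (c : Tp) : 'M[k]_(NQ, Nq) :=
  \matrix_(i, j) ([forall t, (ev i t : nat) == p * ev j t + c t]%N)%:R.
Definition Yc (c : Tp) : 'M[k]_(Nq, NQ) :=
  \matrix_(i, j) ([forall t, (ev j t : nat) == p * ev i t + c t]%N)%:R.

Lemma XMY c (M : 'M[k]_Nq) i j : (Xc c *m M *m Yc c) i j =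
  ((c == modT (ev i)) && (c == modT (ev j)))%:R *
     M (enum_rank (divT (ev i))) (enum_rank (divT (ev j))).
Proof.
rewrite !mxE.
under eq_bigr => l2 _.
  rewrite !mxE.
  under eq_bigr => l1 _ do rewrite !mxE decompE -{2}(enum_valK l1).
  rewrite (sum_T (fun y => ((y == divT (ev i)) && (c == modT (ev i)))%:R * M (enum_rank y) l2)).
  rewrite sum_ind decompE -{1}(enum_valK l2).
  over.
rewrite (sum_T (fun y => (c == modT (ev i))%:R * M (enum_rank (divT (ev i))) (enum_rank y) *
   ((y == divT (ev j)) && (c == modT (ev j)))%:R)).
rewrite sum_indr.
by case: (c == modT (ev i)); case: (c == modT (ev j)); rewrite /= ?mul1r ?mulr1 ?mul0r ?mulr0.
Qed.

Lemma modT_eq (a b : TQ) : (modT a == modT b) = [forall t, (a t %% p == b t %% p)%N].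
Proof.
apply/eqP/forallP => [E t|H].
  by have := congr1 (fun g : Tp => nat_of_ord (g t)) E; rewrite /= !ffunE /= => ->.
by apply/ffunP => t; apply: val_inj; rewrite !ffunE /=; apply/eqP.
Qed.

Lemma block_decomp (pc : p \in [pchar k]) (f : pseries k n) :
  frob_mx (hser p f) (p * q) =
  \sum_(c : Tp) Xc c *m map_mx (pFrobenius_aut pc) (frob_mx f q) *m Yc c.
Proof.
have p0 : (0 < p)%N by apply: prime_gt0; apply: pcharf_prime pc.
apply/matrixP => i j; rewrite summxE frob_mxE mxFE.
under eq_bigr => c _ do rewrite XMY.
set a := ev i; set b := ev j.
set K := map_mx _ _ _ _.
rewrite (eq_bigr (fun c => ((c == modT a) && (modT a == modT b))%:R * K)); last first.
  by move=> c _; case: eqP => [->|]; rewrite ?eqxx //= eq_sym.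
rewrite sum_ind /K mxE frob_mxE mxFE !evK pFrobenius_autE modT_eq /hser.
have E : forall t, ((a t <= b t) && (p %| b t - a t))%N =
   ((a t %% p == b t %% p) && (divT a t <= divT b t))%N.
  by move=> t; rewrite coordE // !ffunE.
have key : [forall t, (a t <= b t)%N] && [forall t, (p %| [ffun t => (b t - a t)%N] t)%N] =
  [forall t, (a t %% p == b t %% p)%N] && [forall t, (divT a t <= divT b t)%N].
  apply/andP/andP => [[/forallP H1 /forallP H2]|[/forallP H1 /forallP H2]]; split; apply/forallP => t.
  - by have := E t; rewrite H1 -(ffunE (fun t => (b t - a t)%N)) H2 => /esym/andP[].
  - by have := E t; rewrite H1 -(ffunE (fun t => (b t - a t)%N)) H2 => /esym/andP[].
  - by have := E t; rewrite H1 H2 => /andP[].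
  - by have := E t; rewrite H1 H2 ffunE => /andP[].
have e0 : (0 : k) ^+ p = 0 by rewrite expr0n eqn0Ngt p0.
case: (boolP [forall t, (a t %% p == b t %% p)%N]) => Q1; last first.
  move: key; rewrite (negbTE Q1) /= mul0r.
  by case: [forall t, (a t <= b t)%N]; case: [forall t, (p %| _)%N].
move: key; rewrite Q1 mul1r /=.
case: [forall t, (a t <= b t)%N]; case: [forall t, (p %| _)%N];
  case: [forall t, (divT a t <= divT b t)%N] => //= _; rewrite ?e0 //.
congr (f _ ^+ p); apply/ffunP => t; rewrite !ffunE /=.
apply: coord_div => //; exact/eqP/(forallP Q1).
Qed.

End Block.

Lemma card_T n q : #|trunc_mon n q| = (q ^ n)%N.
Proof. by rewrite card_ffun !card_ord. Qed.

Lemma rank_pow (k : fieldType) N (A : 'M[k]_N) i :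
  (N - \rank (A ^+ i.+1) <= i.+1 * (N - \rank A))%N.
Proof.
elim: i => [|i IH]; first by rewrite expr1 mul1n.
have := mxrank_Frobenius (A ^+ i.+1) 1%:M A.
rewrite mulmx1 mul1mx mxrank1 mulmxE -exprSr => H.
have := rank_leq_row A; have := rank_leq_row (A ^+ i.+1); lia.
Qed.

Section Ineq.
Variables (k : fieldType) (n p : nat).
Hypothesis pc : p \in [pchar k].

Lemma hk_pow (f : pseries k n) Q :
  (hk_length (hser p f) Q <= p * hk_length f Q)%N.
Proof.
have p0 : (0 < p)%N by apply: prime_gt0; apply: pcharf_prime pc.
rewrite /hk_length -frob_pow //; case: p p0 => // p' _; exact: rank_pow.
Qed.

Lemma rank_hser_le (f : pseries k n) q :
  (\rank (frob_mx (hser p f) (p * q)) <= p ^ n * \rank (frob_mx f q))%N.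
Proof.
rewrite (@block_decomp k n p q pc).
apply: leq_trans (rank_sum (index_enum (trunc_mon n p)) _) _.
apply: (@leq_trans (\sum_(c <- index_enum (trunc_mon n p)) \rank (frob_mx f q))).
  apply: leq_sum => c _; apply: leq_trans (mxrankM_maxl _ _) _.
  by apply: leq_trans (mxrankM_maxr _ _) _; rewrite mxrank_map.
by rewrite sum_nat_const -(card_T n p).
Qed.

Lemma hk_block (f : pseries k n) q :
  (p ^ n * hk_length f q <= hk_length (hser p f) (p * q))%N.
Proof.
rewrite /hk_length mulnBr.
have e2 : (p ^ n * #|trunc_mon n q| = #|trunc_mon n (p * q)|)%N.
  by rewrite !card_T expnMn.
have := rank_hser_le f q; lia.
Qed.

Lemma hk_mono (f : pseries k n) q : (0 < n)%N ->
  (p ^ n.-1 * hk_length f q <= hk_length f (p * q))%N.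
Proof.
move=> n0; have p0 : (0 < p)%N by apply: prime_gt0; apply: pcharf_prime pc.
have := leq_trans (hk_block f q) (hk_pow f (p * q)).
by case: n n0 f => // n' _ f; rewrite expnS -mulnA leq_pmul2l.
Qed.
End Ineq.



Lemma nat_min (P : nat -> Prop) : (exists v, P v) ->
  exists v, P v /\ forall w, P w -> (v <= w)%N.
Proof.
move=> [v Pv]; have ex : exists v, `[< P v >] by exists v; apply/asboolP.
case: (ex_minnP ex) => m /asboolP Pm Hm; exists m; split => // w Pw.
by apply: Hm; apply/asboolP.
Qed.

Section Lex.
Variable n : nat.
Definition lexlt (x y : 'I_n -> nat) : Prop :=
  exists j : 'I_n, (forall i : 'I_n, (i < j)%N -> x i = y i) /\ (x j < y j)%N.

Definition lexj (j : nat) (x y : 'I_n -> nat) : Prop :=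
  exists i : 'I_n, (i < j)%N /\ (forall i' : 'I_n, (i' < i)%N -> x i' = y i') /\ (x i < y i)%N.

Lemma lex_min (S : ('I_n -> nat) -> Prop) : (exists m, S m) ->
  exists m, S m /\ forall m', S m' -> ~ lexlt m' m.
Proof.
move=> exS.
have claim : forall j, (j <= n)%N -> exists m, S m /\ forall m', S m' -> ~ lexj j m' m.
  elim => [_|j IH jn].
    by case: exS => m Sm; exists m; split => // m' _ [i []].
  have [m [Sm Hm]] := IH (ltnW jn).
  pose jj : 'I_n := Ordinal jn.
  pose P v := exists m', S m' /\ (forall i : 'I_n, (i < j)%N -> m' i = m i) /\ m' jj = v.
  have [v [[m1 [Sm1 [Am1 Em1]]] Hv]] : exists v, P v /\ forall w, P w -> (v <= w)%N.
    by apply: nat_min; exists (m jj); exists m.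
  exists m1; split => // m' Sm' [i [ij [Ag Lt]]].
  rewrite ltnS leq_eqVlt in ij; case/orP: ij => [/eqP ij|ij].
    have eij : i = jj by apply: val_inj.
    have Pm' : P (m' jj).
      exists m'; split => //; split => // i' i'j; rewrite Ag ?ij // Am1 //.
    have := Hv _ Pm'; rewrite -Em1 -eij leqNgt Lt //.
  apply: (Hm m' Sm'); exists i; split => //; split.
    move=> i' i'i; rewrite Ag // Am1 //; exact: ltn_trans i'i ij.
  by rewrite -(Am1 i ij).
have [m [Sm Hm]] := claim n (leqnn n).
exists m; split => // m' Sm' [j [Hj Lj]]; apply: (Hm m' Sm'); exists j; split => //.
Qed.

Lemma lex_total (x y : 'I_n -> nat) : (exists i, x i != y i) -> lexlt x y \/ lexlt y x.
Proof.
move=> [i0 H0].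
have [v [[i [vi Hi]] Hv]] : exists v, (exists i : 'I_n, nat_of_ord i = v /\ x i != y i) /\
    forall w, (exists i : 'I_n, nat_of_ord i = w /\ x i != y i) -> (v <= w)%N.
  by apply: nat_min; exists i0, i0.
have Ag : forall i' : 'I_n, (i' < i)%N -> x i' = y i'.
  move=> i' i'i; apply/eqP; apply: contraT => ne.
  by have := Hv i' (ex_intro _ i' (conj erefl ne)); rewrite -vi leqNgt i'i.
case: (ltngtP (x i) (y i)) => [lt|gt|eq]; first by left; exists i.
  by right; exists i; split => // i' i'i; rewrite Ag.
by rewrite eq eqxx in Hi.
Qed.

Lemma lex_add (x y c : 'I_n -> nat) : lexlt x y ->
  lexlt (fun i => x i + c i)%N (fun i => y i + c i)%N.
Proof. by case=> j [Ag Lt]; exists j; split => [i ij|] /=; [rewrite Ag | rewrite ltn_add2r]. Qed.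

Lemma lex_cancel (x y c : 'I_n -> nat) :
  lexlt (fun i => x i + c i)%N (fun i => y i + c i)%N -> lexlt x y.
Proof.
case=> j [Ag Lt]; exists j; split => [i ij|]; last by rewrite /= ltn_add2r in Lt.
by apply/eqP; rewrite -(eqn_add2r (c i)) Ag.
Qed.

Lemma lex_ext (x y x' y' : 'I_n -> nat) : (forall i, x i = x' i) ->
  (forall i, y i = y' i) -> lexlt x y -> lexlt x' y'.
Proof. move=> ex ey [j [Ag Lt]]; exists j; split => [i ij|]; [by rewrite -ex -ey Ag | by rewrite -ex -ey]. Qed.

End Lex.

Lemma leq_expr (a b e : nat) : (a <= b)%N -> (a ^ e <= b ^ e)%N.
Proof. by move=> ab; elim: e => // e IH; rewrite !expnS leq_mul. Qed.

Lemma pow_bound (q M n : nat) : (q * (q ^ n - (q - M) ^ n) <= n * M * q ^ n)%N.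
Proof.
elim: n => [|n IH]; first by rewrite !expn0 subnn muln0.
have BA : ((q - M) ^ n <= q ^ n)%N by apply: leq_expr; apply: leq_subr.
rewrite !expnS.
case: (leqP M q) => Mq.
  have E : (q * q ^ n - (q - M) * (q - M) ^ n = q * (q ^ n - (q - M) ^ n) + M * (q - M) ^ n)%N.
    rewrite mulnBl mulnBr; have : (M * (q - M) ^ n <= q * (q - M) ^ n)%N by rewrite leq_mul2r Mq orbT.
    have : (q * (q - M) ^ n <= q * q ^ n)%N by rewrite leq_mul2l BA orbT.
    lia.
  rewrite E mulnDr.
  have h1 : (q * (M * (q - M) ^ n) <= M * (q * q ^ n))%N.
    by rewrite mulnCA; exact: leq_mul (leqnn M) (leq_mul (leqnn q) BA).
  have h2 : (q * (q * (q ^ n - (q - M) ^ n)) <= n * M * (q * q ^ n))%N.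
    by rewrite [X in (_ <= X)%N]mulnCA; exact: leq_mul (leqnn q) IH.
  rewrite mulSn mulnDl; lia.
rewrite (_ : q - M = 0)%N; last by lia.
rewrite mul0n subn0 mulSn mulnDl.
have : (q * (q * q ^ n) <= M * (q * q ^ n))%N by rewrite leq_mul2r ltnW ?orbT.
lia.
Qed.

Lemma row_free_from (k : fieldType) m N (A : 'M[k]_(m, N)) :
  (forall u : 'rV_m, u *m A = 0 -> u = 0) -> row_free A.
Proof.
move=> H; rewrite -kermx_eq0; apply/eqP/row_matrixP => i; rewrite row0.
by apply: H; rewrite -row_mul mulmx_ker row0.
Qed.

Section Lower.
Variables (k : fieldType) (n q : nat) (f : pseries k n) (mu : {ffun 'I_n -> nat}).
Hypothesis fmu : f mu != 0.
Hypothesis mumin : forall m : {ffun 'I_n -> nat}, f m != 0 -> ~ lexlt m mu.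
Local Notation T := (trunc_mon n q).
Let M := (\sum_(t : 'I_n) mu t)%N.
Local Notation W := (trunc_mon n (q - M)).

Lemma mu_le t : (mu t <= M)%N.
Proof. by rewrite /M (bigD1 t) //= leq_addr. Qed.

Definition emb (w : W) : T := [ffun t => widen_ord (leq_subr M q) (w t)].

Definition Sub : 'M[k]_(#|W|, #|T|) :=
  rowsub (fun j => enum_rank (emb (ev j))) (frob_mx f q).

Lemma Sub_free : row_free Sub.
Proof.
apply: row_free_from => u uS; apply/matrixP => i j1; rewrite mxE; apply/eqP.
apply: contraT => nz1; rewrite [i]ord1 in nz1 *.
pose S (m : 'I_n -> nat) := exists j, u 0 j != 0 /\ forall t, m t = emb (ev j) t.
have [m0 [[j0 [nz0 E0]] min0]] : exists m, S m /\ forall m', S m' -> ~ lexlt m' m.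
  by apply: lex_min; exists (fun t => emb (ev j1) t); exists j1.
set a0 := emb (ev j0).
have bd : forall t, (a0 t + mu t < q)%N.
  move=> t; have := ltn_ord (ev j0 t); have := mu_le t; rewrite /a0 ffunE /=; lia.
pose b0 : T := [ffun t => Ordinal (bd t)].
have embE : forall w t, (emb w t : nat) = w t by move=> w t; rewrite ffunE.
have b0E : forall t, (b0 t : nat) = (a0 t + mu t)%N by move=> t; rewrite ffunE.
have := congr1 (fun v : 'rV_#|T| => v 0 (enum_rank b0)) uS; rewrite /= !mxE.
rewrite (bigD1 j0) //= big1 ?addr0.
  rewrite /Sub !mxE /= !enum_rankK.
  rewrite (_ : [forall t, _] = true); last first.
    by apply/forallP => t; rewrite /b0 /a0 !ffunE /= /emb ffunE /= leq_addr.
  rewrite (_ : [ffun t => _] = mu); last first.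
    by apply/ffunP => t; rewrite !ffunE /= addKn.
  by move/eqP; rewrite mulf_eq0 (negbTE nz0) (negbTE fmu).
move=> j jj0; rewrite /Sub !mxE /= !enum_rankK.
case: (eqVneq (u 0 j) 0) => [->|nzj]; first by rewrite mul0r.
case: ifP => [/forallP le|_]; last by rewrite mulr0.
set m := [ffun t => _].
case: (eqVneq (f m) 0) => [->|fm]; first by rewrite mulr0.
exfalso; set a := emb (ev j).
have nlt := mumin fm.
have ne : exists t, m t != mu t.
  apply/existsP; apply: contraT; rewrite negb_exists => /forallP H.
  case/eqP: jj0; apply: ev_inj; apply: T_eq => t.
  have := eqP (negPn (H t)); rewrite /m ffunE b0E /a0 /a !embE => E.
  have := le t; rewrite b0E /a0 /a !embE => lt.
  lia.
case: (lex_total ne) => // lt.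
have H1 : forall t, (m t + a t = a0 t + mu t)%N.
  move=> t; have := le t; rewrite /m ffunE b0E /a0 /a !embE; lia.
have L1 : lexlt (fun t => a t + mu t)%N (fun t => a0 t + mu t)%N.
  by apply: (lex_ext _ _ (@lex_add _ _ _ (fun t => a t) lt)) => t /=; [exact: addnC | exact: H1].
have L2 := lex_cancel L1.
apply: (min0 (fun t => a t)); first by exists j; split.
by apply: (lex_ext _ _ L2) => t //; rewrite E0.
Qed.

Lemma rank_lower : ((q - M) ^ n <= \rank (frob_mx f q))%N.
Proof.
have := Sub_free; rewrite /row_free => /eqP E.
by rewrite -(card_T n (q - M)) -E mxrankS // rowsub_sub.
Qed.

End Lower.

Section Generic.
Variables (k : fieldType) (m N : nat).

Lemma minor_rank (X : 'M[k]_(m, N)) r (f : 'I_r -> 'I_m) (g : 'I_r -> 'I_N) :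
  (\rank (\matrix_(i, j) X (f i) (g j)) <= \rank X)%N.
Proof.
have -> : \matrix_(i, j) X (f i) (g j) =
    rowsub f X *m \matrix_(l, j) ((l == g j)%:R : k).
  apply/matrixP => i j; rewrite !mxE (bigD1 (g j)) //= !mxE eqxx mulr1 big1 ?addr0 //.
  by move=> l /negbTE lg; rewrite mxE lg mulr0.
by apply: leq_trans (mxrankM_maxl _ _) _; apply: mxrankS; apply: rowsub_sub.
Qed.

Lemma minor_exists (A : 'M[k]_(m, N)) : exists (f : 'I_(\rank A) -> 'I_m)
   (g : 'I_(\rank A) -> 'I_N), \matrix_(i, j) A (f i) (g j) \in unitmx.
Proof.
pose f := maxrankfun A.
have rk1 : \rank (rowsub f A) = \rank A by apply/eqP; apply: maxrowsub_free.
have rkA : row_full (rowsub f A)^T by rewrite /row_full mxrank_tr rk1.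
pose g := fullrankfun rkA.
exists f, g; rewrite -unitmx_tr.
have -> : (\matrix_(i, j) A (f i) (g j))^T = rowsub g (rowsub f A)^T.
  by apply/matrixP => i j; rewrite !mxE.
exact: fullrowsub_unit.
Qed.

Lemma generic_rank (A B : 'M[k]_(m, N)) : exists P : {poly k}, P != 0 /\
  forall a, ~~ root P a -> (\rank A <= \rank (A + a *: B)%R)%N.
Proof.
have [f [g U]] := minor_exists A.
pose Mp := \matrix_(i, j) ((A (f i) (g j))%:P + 'X * (B (f i) (g j))%:P).
have ev a : (\det Mp).[a] = \det (\matrix_(i, j) (A + a *: B) (f i) (g j)).
  rewrite -horner_evalE -det_map_mx; congr (\det _); apply/matrixP => i j.
  rewrite !mxE; change (((A (f i) (g j))%:P + 'X * (B (f i) (g j))%:P).[a] = A (f i) (g j) + a * B (f i) (g j)).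
  by rewrite hornerD hornerM hornerX !hornerC mulrC.
exists (\det Mp); split.
  apply: contraTneq U => P0; rewrite unitmxE unitfE negbK.
  have := ev 0; rewrite P0 horner0 => ->.
  by apply/eqP; congr (\det _); apply/matrixP => i j; rewrite !mxE mul0r addr0.
move=> a Ha; have : \matrix_(i, j) (A + a *: B) (f i) (g j) \in unitmx.
  by rewrite unitmxE unitfE -ev.
move/mxrank_unit => E; rewrite -[X in (X <= _)%N]E. exact: minor_rank.
Qed.
End Generic.

Lemma frob_add (k : fieldType) n (f g : pseries k n) a q :
  frob_mx (ps_add_scale f g a) q = (frob_mx f q + a *: frob_mx g q)%R.
Proof.
apply/matrixP => i j; rewrite !mxE /=; case: ifP => _ //.
by rewrite mulr0 addr0.
Qed.

Lemma exists_mu (k : fieldType) n (f : pseries k n) : (exists m, f m != 0) ->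
  exists mu, f mu != 0 /\ forall m, f m != 0 -> ~ lexlt m mu.
Proof.
move=> [m0 H0].
have [g [[mu [fmu Eg]] Hg]] := @lex_min n
  (fun g => exists mu : {ffun 'I_n -> nat}, f mu != 0 /\ forall t, g t = mu t)
  (ex_intro _ (fun t => m0 t) (ex_intro _ m0 (conj H0 (fun t => erefl)))).
exists mu; split => // m fm lt; apply: (Hg (fun t => m t)); first by exists m.
by apply: (lex_ext _ _ lt) => t //.
Qed.

Lemma hk_upper (k : fieldType) n (f : pseries k n) (mu : {ffun 'I_n -> nat}) q :
  f mu != 0 -> (forall m, f m != 0 -> ~ lexlt m mu) -> (0 < q)%N -> (0 < n)%N ->
  (hk_length f q <= n * (\sum_(t < n) mu t) * q ^ n.-1)%N.
Proof.
move=> fmu mumin q0 n0.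
have h1 := rank_lower q fmu mumin.
have h2 := pow_bound q (\sum_(t < n) mu t) n.
have h3 : (q ^ n = q * q ^ n.-1)%N by case: n n0 {f mu fmu mumin h1 h2} => // n' _; rewrite expnS.
have c := card_T n q.
have H : (q * hk_length f q <= n * (\sum_(t < n) mu t) * q ^ n)%N.
  rewrite /hk_length; apply: leq_trans h2; rewrite leq_mul2l; apply/orP; right.
  move: h1 c; move: (\rank _) => r; lia.
rewrite -(leq_pmul2l q0); apply: (leq_trans H); by rewrite h3 mulnCA.
Qed.

Section Seq.
Variables (k : fieldType) (n p : nat).

Definition useq (f : pseries k n) : nat -> Rdefinitions.R :=
  fun e => ((hk_length f (p ^ e))%:R / ((p ^ e)%:R ^+ n.-1)).

Lemma eHKE f : eHK p f = limn (useq f).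
Proof. by []. Qed.

Hypothesis p0 : (0 < p)%N.

Lemma D_gt0 e : 0 < ((p ^ e)%:R ^+ n.-1 : Rdefinitions.R).
Proof. by apply: exprn_gt0; rewrite ltr0n expn_gt0 p0. Qed.

Lemma useq_ge0 f e : 0 <= useq f e.
Proof. by apply: divr_ge0; [exact: ler0n | exact: ltW (D_gt0 e)]. Qed.

Lemma useq_mono f e : p \in [pchar k] -> (0 < n)%N -> useq f e <= useq f e.+1.
Proof.
move=> pc n0; have H := hk_mono pc f (p ^ e) n0.
rewrite /useq expnS natrM exprMn invfM mulrA ler_pM2r ?invr_gt0 ?D_gt0 //.
rewrite ler_pdivlMr ?exprn_gt0 ?ltr0n // -natrX -natrM ler_nat mulnC //.
Qed.

Lemma useq_bound f (mu : {ffun 'I_n -> nat}) e :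
  f mu != 0 -> (forall m, f m != 0 -> ~ lexlt m mu) -> (0 < n)%N ->
  useq f e <= (n * (\sum_(t < n) mu t))%:R.
Proof.
move=> fmu mumin n0; have pe : (0 < p ^ e)%N by rewrite expn_gt0 p0.
have H := hk_upper fmu mumin pe n0.
rewrite /useq ler_pdivrMr ?D_gt0 // -natrX -natrM ler_nat; exact: H.
Qed.

Lemma useq_cvg f (mu : {ffun 'I_n -> nat}) :
  p \in [pchar k] -> f mu != 0 -> (forall m, f m != 0 -> ~ lexlt m mu) -> (0 < n)%N ->
  cvgn (useq f).
Proof.
move=> pc fmu mumin n0; apply: nondecreasing_is_cvgn.
  by apply/nondecreasing_seqP => e; exact: useq_mono.
exists (n * (\sum_(t < n) mu t))%:R => _ [e _ <-]; exact: useq_bound.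
Qed.

Lemma eHK_le f1 f2 : cvgn (useq f2) -> (forall e, useq f1 e <= useq f2 e) ->
  eHK p f1 <= eHK p f2.
Proof.
move=> c2 le; rewrite !eHKE; case: (pselect (cvgn (useq f1))) => c1.
  by apply: ler_lim => //; apply: nearW.
rewrite dvgP //; apply: limr_ge => //; apply: nearW => e; exact: useq_ge0.
Qed.
End Seq.

Unset Implicit Arguments.

Theorem theorem2p7 (k : closedFieldType) (p : nat) (n : nat)
  (f g : pseries k n) :
  uncountable k ->
  prime p -> p \in [pchar k] ->
  (exists m, f m != 0) -> ps_const f = 0 ->
  (exists m, g m != 0) -> ps_const g = 0 ->
  ~ (exists c : k, forall m, g m = c * f m) ->
  exists L : k -> Prop,
    zariski_dense L /\
    forall a : k, L a -> eHK p (ps_add_scale f g a) <= eHK p f.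
Proof.
move=> unc pp pc fnz f0 _ _ _.
have p0 := prime_gt0 pp.
have n0 : (0 < n)%N.
  case: n f g fnz f0 => [|//] f g [m fm]; rewrite /ps_const => f0; exfalso; move: fm.
  by rewrite (_ : m = [ffun _ => 0%N]) ?f0 ?eqxx //; apply/ffunP => -[].
have [mu [fmu mumin]] := exists_mu fnz.
have cf := useq_cvg p0 pc fmu mumin n0.
pose PP e := generic_rank (frob_mx f (p ^ e)) (frob_mx g (p ^ e)).
pose Pe e := sval (cid (PP e)).
have Pnz e : Pe e != 0 := (svalP (cid (PP e))).1.
have Prk e a : ~~ root (Pe e) a -> (\rank (frob_mx f (p ^ e)) <=
     \rank (frob_mx f (p ^ e) + a *: frob_mx g (p ^ e))%R)%N := (svalP (cid (PP e))).2 a.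
exists (fun a => forall e, ~~ root (Pe e) a); split.
  move=> Q HQ; apply/eqP; apply: contraT => Qnz; exfalso; apply: unc.
  pose rs (P : {poly k}) := sval (closed_field_poly_normal P).
  have rsP P x : P != 0 -> root P x -> x \in rs P.
    move=> Pn; rewrite {1}(svalP (closed_field_poly_normal P)) rootZ ?lead_coef_eq0 //.
    by rewrite root_prod_XsubC.
  pose Rs e := if e is e'.+1 then rs (Pe e') else rs Q.
  exists (fun m => if @unpickle (nat * nat)%type m is Some (e, i) then nth 0 (Rs e) i else 0).
  move=> x.
  have [e xe] : exists e, x \in Rs e.
    case: (pselect (forall e, ~~ root (Pe e) x)) => Lx.
      by exists 0%N; apply: rsP => //; exact: HQ.
    move/existsNP: Lx => [e /negP /negbNE rx]; exists e.+1; exact: rsP.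
  by exists (pickle (e, index x (Rs e))); rewrite pickleK nth_index.
move=> a La; apply: eHK_le => // e.
rewrite /useq ler_pM2r ?invr_gt0 ?D_gt0 // ler_nat /hk_length frob_add.
exact: leq_sub2l (Prk e a (La e)).
Qed.
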